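(* The class of cyclic groups of prime power order is $\log$-compressible via $\Sigma_3$-sentences in the language of monoids $L(e,\circ)$: there is a constant $c$ such that every cyclic group $G$ with $|G|=p^k$ ($p$ prime, $k\ge1$) is described by a $\Sigma_3$-sentence $\phi$ of the language of monoids with $|\phi|\le c\log|G|$.
   Context: A sentence $\phi$ describes a structure $G$ if $G$ is, up to isomorphism, the unique model of $\phi$. The length $|\phi|$ of a formula is its number of symbols, each variable counting as a single symbol. A $\Sigma_r$-sentence is a sentence in prenex normal form whose quantifier prefix starts with an existential quantifier and has $r-1$ quantifier alternations. Here $\log m=\min\{r\in\mathbb N: 2^r\ge m\}$. *)

(* Defs.v *)
From mathcomp Require Import all_boot all_fingroup all_solvable.
Set Implicit Arguments. Unset Strict Implicit. Unset Printing Implicit Defensive.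

Inductive term : Type :=
| TVar : nat -> term
| TE : term
| TOp : term -> term -> term.

Inductive formula : Type :=
| FEq : term -> term -> formula
| FNot : formula -> formula
| FAnd : formula -> formula -> formula
| FOr : formula -> formula -> formula
| FImp : formula -> formula -> formula
| FEx : nat -> formula -> formula
| FAll : nat -> formula -> formula.

(* Length = number of symbols; each variable counts as one symbol.
   Parentheses and connectives are counted as symbols. *)
Fixpoint tsize (t : term) : nat :=
  match t with
  | TVar _ => 1
  | TE => 1
  | TOp a b => tsize a + tsize b + 3      (* "(", "o", ")" *)
  end.

Fixpoint fsize (f : formula) : nat :=
  match f with
  | FEq a b => tsize a + tsize b + 1
  | FNot g => fsize g + 1
  | FAnd g h | FOr g h | FImp g h => fsize g + fsize h + 3
  | FEx _ g | FAll _ g => fsize g + 2      (* quantifier + variable *)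
  end.

Fixpoint tvars (t : term) : seq nat :=
  match t with
  | TVar n => [:: n]
  | TE => [::]
  | TOp a b => tvars a ++ tvars b
  end.

Fixpoint free_vars (f : formula) : seq nat :=
  match f with
  | FEq a b => tvars a ++ tvars b
  | FNot g => free_vars g
  | FAnd g h | FOr g h | FImp g h => free_vars g ++ free_vars h
  | FEx x g | FAll x g => filter (fun y => y != x) (free_vars g)
  end.

Definition sentence (f : formula) : Prop := free_vars f = [::].

Fixpoint qfree (f : formula) : bool :=
  match f with
  | FEq _ _ => true
  | FNot g => qfree g
  | FAnd g h | FOr g h | FImp g h => qfree g && qfree h
  | FEx _ _ | FAll _ _ => false
  end.

(* Prenex formulas whose quantifier prefix consists of exactly r blocks,
   starting with an existential (ExBlocks) resp. universal (AllBlocks) block. *)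
Inductive ExBlocks : nat -> formula -> Prop :=
| ExB_qf : forall x g, qfree g -> ExBlocks 1 (FEx x g)
| ExB_ex : forall r x g, ExBlocks r g -> ExBlocks r (FEx x g)
| ExB_all : forall r x g, AllBlocks r g -> ExBlocks r.+1 (FEx x g)
with AllBlocks : nat -> formula -> Prop :=
| AllB_qf : forall x g, qfree g -> AllBlocks 1 (FAll x g)
| AllB_all : forall r x g, AllBlocks r g -> AllBlocks r (FAll x g)
| AllB_ex : forall r x g, ExBlocks r g -> AllBlocks r.+1 (FAll x g).

Definition Sigma (r : nat) (f : formula) : Prop := ExBlocks r f.

Definition upd {M : Type} (v : nat -> M) (x : nat) (a : M) : nat -> M :=
  fun y => if y == x then a else v y.

Fixpoint teval {M : Type} (e : M) (op : M -> M -> M) (v : nat -> M) (t : term) : M :=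
  match t with
  | TVar n => v n
  | TE => e
  | TOp a b => op (teval e op v a) (teval e op v b)
  end.

Fixpoint sat {M : Type} (e : M) (op : M -> M -> M) (v : nat -> M) (f : formula) : Prop :=
  match f with
  | FEq a b => teval e op v a = teval e op v b
  | FNot g => ~ sat e op v g
  | FAnd g h => sat e op v g /\ sat e op v h
  | FOr g h => sat e op v g \/ sat e op v h
  | FImp g h => sat e op v g -> sat e op v h
  | FEx x g => exists a : M, sat e op (upd v x a) g
  | FAll x g => forall a : M, sat e op (upd v x a) g
  end.

Definition models {M : Type} (e : M) (op : M -> M -> M) (f : formula) : Prop :=
  forall v : nat -> M, sat e op v f.

Definition isomorphic {M N : Type} (e : M) (op : M -> M -> M)
  (e' : N) (op' : N -> N -> N) : Prop :=
  exists h : M -> N, bijective h /\ h e = e' /\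
    forall x y, h (op x y) = op' (h x) (h y).

Definition describes {M : Type} (e : M) (op : M -> M -> M) (f : formula) : Prop :=
  models e op f /\
  forall (N : Type) (e' : N) (op' : N -> N -> N),
    models e' op' f -> isomorphic e' op' e op.

Definition gcarrier {gT : finGroupType} (G : {group gT}) : Type :=
  {x : gT | x \in G}.

Definition gunit {gT : finGroupType} (G : {group gT}) : gcarrier G :=
  exist _ 1%g (group1 G).

Definition gmul {gT : finGroupType} (G : {group gT}) (x y : gcarrier G) : gcarrier G :=
  exist _ (proj1_sig x * proj1_sig y)%g (groupM (proj2_sig x) (proj2_sig y)).

(* log m = min { r : 2^r >= m }, which is mathcomp's up_log 2 m. *)
Definition log2up (m : nat) : nat := up_log 2 m.

(* Main.v *)
Require Import Defs.
From mathcomp Require Import all_boot all_fingroup all_solvable.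
From mathcomp Require Import zify.
From Stdlib Require Import FunctionalExtensionality ClassicalEpsilon.
Set Implicit Arguments. Unset Strict Implicit. Unset Printing Implicit Defensive.

Fixpoint exr (a c : nat) (f : formula) : formula :=
  match c with 0 => f | c'.+1 => FEx a (exr a.+1 c' f) end.
Fixpoint allr (a c : nat) (f : formula) : formula :=
  match c with 0 => f | c'.+1 => FAll a (allr a.+1 c' f) end.
Fixpoint andr (F : nat -> formula) (a c : nat) : formula :=
  match c with 0 => FEq TE TE | c'.+1 => FAnd (F a) (andr F a.+1 c') end.
Fixpoint tnum (m j c : nat) : term :=
  match c with 0 => TE | c'.+1 => TOp (if odd m then TVar j else TE) (tnum m./2 j.+1 c') end.
Fixpoint tprod (j c : nat) : term :=
  match c with 0 => TE | c'.+1 => TOp (TVar j) (tprod j.+1 c') end.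

Section Sem.
Variables (M : Type) (e : M) (op : M -> M -> M).

Lemma sat_exr a c f v :
  sat e op v (exr a c f) <->
  exists w, (forall y, ~~ ((a <= y) && (y < a + c)) -> w y = v y) /\ sat e op w f.
Proof.
elim: c a v => [|c IH] a v /=.
  split; [by move=> H; exists v | move=> [w [Hw H]]].
  have -> : v = w by apply: FunctionalExtensionality.functional_extensionality => y; rewrite Hw //; lia.
  done.
split.
  move=> [x /IH [w [Hw H]]]; exists w; split => // y Hy.
  rewrite Hw; first by rewrite /upd; case: eqP => // E; rewrite E in Hy; lia.
  lia.
move=> [w [Hw H]]; exists (w a); apply/IH; exists w; split => // y Hy.
rewrite /upd; case: eqP => [->//|ne]; apply: Hw; lia.
Qed.

Lemma sat_allr a c f v :
  sat e op v (allr a c f) <->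
  forall w, (forall y, ~~ ((a <= y) && (y < a + c)) -> w y = v y) -> sat e op w f.
Proof.
elim: c a v => [|c IH] a v /=.
  split; [move=> H w Hw | by move=> H; apply: H].
  have -> : w = v by apply: FunctionalExtensionality.functional_extensionality => y; rewrite Hw //; lia.
  done.
split.
  move=> H w Hw; have /IH := H (w a); apply => y Hy.
  rewrite /upd; case: eqP => [->//|ne]; apply: Hw; lia.
move=> H x; apply/IH => w Hw; apply: H => y Hy.
rewrite Hw; first by rewrite /upd; case: eqP => // E; rewrite E in Hy; lia.
lia.
Qed.

Lemma sat_andr F a c v :
  sat e op v (andr F a c) <-> forall i, i < c -> sat e op v (F (a + i)).
Proof.
elim: c a => [|c IH] a /=; first by split.
split.
  move=> [H1 /IH H2] [|i] Hi; first by rewrite addn0.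
  by rewrite -addSnnS; apply: H2.
move=> H; split; first by have := H 0 isT; rewrite addn0.
by apply/IH => i Hi; rewrite addSnnS; apply: H.
Qed.
End Sem.

Section Mon.
Variables (M : Type) (e : M) (op : M -> M -> M).
Hypothesis opA : forall x y z, op x (op y z) = op (op x y) z.
Hypothesis op1 : forall x, op e x = x.
Hypothesis opr1 : forall x, op x e = x.
Variable g : M.
Definition pw (i : nat) : M := iter i (op g) e.

Lemma pwD i j : pw (i + j) = op (pw i) (pw j).
Proof. elim: i => [|i IH] /=; first by rewrite op1. by rewrite /pw /= -/(pw _) IH opA. Qed.

Lemma pw0 : pw 0 = e. Proof. by []. Qed.

Lemma pw_double j : pw (2 ^ j.+1) = op (pw (2 ^ j)) (pw (2 ^ j)).
Proof. by rewrite -pwD expnS mul2n addnn. Qed.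

Lemma tnum_eval w m j c :
  (forall i, i < c -> w (j + i) = pw (2 ^ (j + i))) -> m < 2 ^ c ->
  teval e op w (tnum m j c) = pw (2 ^ j * m).
Proof.
elim: c m j => [|c IH] m j Hw Hm /=.
  by move: Hm; rewrite expn0 ltnS leqn0 => /eqP ->; rewrite muln0.
rewrite IH; last 2 first.
- by move=> i Hi; rewrite addSnnS; apply: Hw.
- by move: Hm; rewrite -(odd_double_half m) expnS; case: (odd m) => /=; lia.
have -> : teval e op w (if odd m then TVar j else TE) = pw (odd m * 2 ^ j).
  by case: (odd m) => /=; rewrite ?mul1n ?mul0n // -(addn0 j) Hw // addn0.
rewrite -pwD; congr pw.
rewrite -{3}(odd_double_half m) expnS; case: (odd m) => /=; lia.
Qed.

Lemma tprod_exists w j c :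
  (forall i, i < c -> exists t, w (j + i) = pw t) ->
  exists s, teval e op w (tprod j c) = pw s.
Proof.
elim: c j => [|c IH] j Hw /=; first by exists 0.
have [s Hs] : exists s, teval e op w (tprod j.+1 c) = pw s.
  by apply: IH => i Hi; rewrite addSnnS; apply: Hw.
have [t Ht] : exists t, w j = pw t by rewrite -(addn0 j); apply: Hw.
by exists (t + s); rewrite Hs Ht pwD.
Qed.

Lemma tprod_eval w j0 j m c :
  (forall i, i < c -> w (j0 + i) = if odd (m %/ 2 ^ i) then pw (2 ^ (j + i)) else e) ->
  m < 2 ^ c ->
  teval e op w (tprod j0 c) = pw (2 ^ j * m).
Proof.
elim: c m j j0 => [|c IH] m j j0 Hw Hm /=.
  by move: Hm; rewrite expn0 ltnS leqn0 => /eqP ->; rewrite muln0.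
rewrite (IH m./2 j.+1); last 2 first.
- move=> i Hi; rewrite addSnnS Hw // addSnnS -divn2 -divnMA -expnS //.
- by move: Hm; rewrite -(odd_double_half m) expnS; case: (odd m) => /=; lia.
have -> : w j0 = pw (odd m * 2 ^ j).
  by rewrite -(addn0 j0) Hw // expn0 divn1 addn0; case: (odd m); rewrite ?mul1n ?mul0n.
rewrite -pwD; congr pw.
rewrite -{3}(odd_double_half m) expnS; case: (odd m) => /=; lia.
Qed.

Lemma pw_mul a q : pw a = e -> pw (q * a) = e.
Proof. move=> Ha; elim: q => [|q IH] //; by rewrite mulSn pwD Ha IH op1. Qed.

Lemma pw_mod a b : pw a = e -> pw b = pw (b %% a).
Proof. move=> Ha; by rewrite {1}(divn_eq b a) pwD pw_mul // op1. Qed.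

Lemma pw_gcd a b : pw a = e -> pw b = e -> pw (gcdn a b) = e.
Proof.
elim/ltn_ind: a b => a IH b Ha Hb; rewrite gcdnE.
case: eqP => [//|/eqP a0].
apply: IH; [by rewrite ltn_pmod // lt0n | by rewrite -(pw_mod b Ha) | done].
Qed.

Lemma pw_inj_mod p k i j :
  prime p -> 0 < k -> pw (p ^ k) = e -> pw (p ^ k.-1) <> e ->
  pw i = pw j -> i %% p ^ k = j %% p ^ k.
Proof.
move=> pp k0 Hn Hm; set n := p ^ k.
have n0 : 0 < n by rewrite expn_gt0 prime_gt0.
rewrite (pw_mod i Hn) (pw_mod j Hn).
have key : forall a b, a < b -> b < n -> pw a = pw b -> False.
  move=> a b ab bn E.
  have Hd : pw (n - b + a) = e.
    by rewrite pwD E -pwD subnK ?Hn // ltnW.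
  have Hpt := pw_gcd Hd Hn.
  have Ht : gcdn (n - b + a) n <= n - b + a.
    by apply: dvdn_leq; [lia | apply: dvdn_gcdl].
  have : gcdn (n - b + a) n %| p ^ k by apply: dvdn_gcdr.
  case/(dvdn_pfactor _ _ pp) => t tk Et; rewrite Et in Hpt Ht.
  have tk' : t <= k.-1.
    case: (ltnP t k) => tk2; first by lia.
    have tk3 : t = k by apply/eqP; rewrite eqn_leq tk tk2.
    by move: Ht; rewrite tk3 -/n; lia.
  apply: Hm.
  have /dvdnP [q ->] := dvdn_exp2l p tk'.
  by apply: pw_mul.
move=> E; case: (ltngtP (i %% n) (j %% n)) => // H.
- by case: (key _ _ H (ltn_pmod _ n0) E).
- by case: (key _ _ H (ltn_pmod _ n0) (esym E)).
Qed.
End Mon.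

Definition body (R n m0 : nat) : formula :=
 FAnd (andr (fun j => FEq (TVar j.+1) (TOp (TVar j) (TVar j))) 0 R.-1)
 (FAnd (FEq (TOp (TVar R) (TOp (TVar R.+1) (TVar R.+2))) (TOp (TOp (TVar R) (TVar R.+1)) (TVar R.+2)))
 (FAnd (FAnd (FEq (TOp TE (TVar R)) (TVar R)) (FEq (TOp (TVar R) TE) (TVar R)))
 (FAnd (andr (fun j => FOr (FEq (TVar (R.+3 + j)) TE) (FEq (TVar (R.+3 + j)) (TVar j))) 0 R)
 (FAnd (FEq (TVar R) (tprod R.+3 R))
 (FAnd (FEq (tnum n 0 R) TE) (FNot (FEq (tnum m0 0 R) TE))))))).

Definition phi (R n m0 : nat) : formula := exr 0 R (allr R 3 (exr R.+3 R (body R n m0))).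

Lemma sat_body (M : Type) (e : M) op w R n m0 :
  sat e op w (body R n m0) <->
  [/\ (forall j, j < R.-1 -> w j.+1 = op (w j) (w j)),
      op (w R) (op (w R.+1) (w R.+2)) = op (op (w R) (w R.+1)) (w R.+2),
      op e (w R) = w R /\ op (w R) e = w R,
      (forall j, j < R -> w (R.+3 + j) = e \/ w (R.+3 + j) = w j) &
      [/\ w R = teval e op w (tprod R.+3 R),
          teval e op w (tnum n 0 R) = e &
          teval e op w (tnum m0 0 R) <> e]].
Proof.
rewrite /body /= !sat_andr /=.
split.
  move=> [H1 [H2 [H3 [H4 [H5 [H6 H7]]]]]]; split => //.
by move=> [H1 H2 H3 H4 [H5 H6 H7]]; do 6!split => //.
Qed.

Lemma exr_blocks r a c f : 0 < c -> AllBlocks r f -> ExBlocks r.+1 (exr a c f).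
Proof.
elim: c a => [|c IH] a // _ H /=; case: c IH => [|c] IH /=; first by constructor.
by apply: ExB_ex; apply: IH.
Qed.
Lemma allr_blocks r a c f : 0 < c -> ExBlocks r f -> AllBlocks r.+1 (allr a c f).
Proof.
elim: c a => [|c IH] a // _ H /=; case: c IH => [|c] IH /=; first by constructor.
by apply: AllB_all; apply: IH.
Qed.
Lemma exr_qf a c f : 0 < c -> qfree f -> ExBlocks 1 (exr a c f).
Proof.
elim: c a => [|c IH] a // _ H /=; case: c IH => [|c] IH /=; first by constructor.
by apply: ExB_ex; apply: IH.
Qed.

Lemma qfree_andr F a c : (forall i, qfree (F i)) -> qfree (andr F a c).
Proof. by move=> H; elim: c a => [|c IH] a //=; rewrite H IH. Qed.

Lemma fv_exr y a c f : y \in free_vars (exr a c f) -> (y \in free_vars f) && ~~ ((a <= y) && (y < a + c)).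
Proof.
elim: c a => [|c IH] a /=; first by move=> ->; lia.
rewrite mem_filter => /andP [ya /IH /andP [-> H]] /=; move: ya H; lia.
Qed.
Lemma fv_allr y a c f : y \in free_vars (allr a c f) -> (y \in free_vars f) && ~~ ((a <= y) && (y < a + c)).
Proof.
elim: c a => [|c IH] a /=; first by move=> ->; lia.
rewrite mem_filter => /andP [ya /IH /andP [-> H]] /=; move: ya H; lia.
Qed.
Lemma fv_andr y F a c : y \in free_vars (andr F a c) -> exists2 i, i < c & y \in free_vars (F (a + i)).
Proof.
elim: c a => [|c IH] a //=; rewrite mem_cat => /orP [H|/IH [i Hi H]].
  by exists 0; rewrite ?addn0.
by exists i.+1; rewrite -?addSnnS.
Qed.
Lemma tv_tnum y m j c : y \in tvars (tnum m j c) -> (j <= y) && (y < j + c).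
Proof.
elim: c m j => [|c IH] m j //=; case: (odd m) => /=.
  by rewrite inE => /orP [/eqP ->|/IH]; lia.
by move/IH; lia.
Qed.
Lemma tv_tprod y j c : y \in tvars (tprod j c) -> (j <= y) && (y < j + c).
Proof.
elim: c j => [|c IH] j //=.
by rewrite inE => /orP [/eqP ->|/IH]; lia.
Qed.

Lemma fv_body y R n m0 : 0 < R -> y \in free_vars (body R n m0) -> y < R.+3 + R.
Proof.
move=> R0; rewrite /body /= !(inE, mem_cat).
repeat match goal with |- is_true (_ || _) -> _ => case/orP end.
all: try (by move/fv_andr => [i Hi]; rewrite /= !inE; lia).
all: try (by move/tv_tprod; lia).
all: try (by move/tv_tnum; lia).
all: try (by move/eqP ->; lia).
all: try done.
Qed.

Lemma phi_sentence R n m0 : 0 < R -> sentence (phi R n m0).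
Proof.
move=> R0; rewrite /sentence /phi.
case E: (free_vars _) => [//|y s]; exfalso.
have : y \in free_vars (exr 0 R (allr R 3 (exr R.+3 R (body R n m0)))) by rewrite E inE eqxx.
case/fv_exr/andP => /fv_allr/andP [/fv_exr/andP [/fv_body H H1] H2] H3.
move: (H R0) H1 H2 H3; lia.
Qed.

Lemma phi_Sigma R n m0 : 0 < R -> Sigma 3 (phi R n m0).
Proof.
move=> R0; rewrite /Sigma /phi; apply: exr_blocks => //; apply: allr_blocks => //.
apply: exr_qf => //=.
by rewrite !qfree_andr.
Qed.

Lemma fsize_exr a c f : fsize (exr a c f) = 2 * c + fsize f.
Proof. by elim: c a => [|c IH] a /=; [lia | rewrite IH; lia]. Qed.
Lemma fsize_allr a c f : fsize (allr a c f) = 2 * c + fsize f.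
Proof. by elim: c a => [|c IH] a /=; [lia | rewrite IH; lia]. Qed.
Lemma fsize_andr F a c K : (forall i, fsize (F i) = K) -> fsize (andr F a c) = (K + 3) * c + 3.
Proof. by move=> H; elim: c a => [|c IH] a /=; [lia | rewrite IH H; lia]. Qed.
Lemma tsize_tnum m j c : Defs.tsize (tnum m j c) = 4 * c + 1.
Proof. elim: c m j => [|c IH] m j /=; [lia | rewrite IH; case: (odd m) => /=; lia]. Qed.
Lemma tsize_tprod j c : Defs.tsize (tprod j c) = 4 * c + 1.
Proof. elim: c j => [|c IH] j /=; [lia | rewrite IH; lia]. Qed.

Lemma phi_size R n m0 : 0 < R -> fsize (phi R n m0) <= 150 * R.
Proof.
move=> R0; rewrite /phi fsize_exr fsize_allr fsize_exr /body /=.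
rewrite (@fsize_andr _ _ _ 7) // (@fsize_andr _ _ _ 9) // !tsize_tnum tsize_tprod.
lia.
Qed.

Section Grp.
Variables (gT : finGroupType) (G : {group gT}) (a : gT).
Hypothesis Ha : a \in G.
Hypothesis EG : forall x, (x \in G) = (x \in <[a]>%g).

Lemma gc_eq (x y : gcarrier G) : proj1_sig x = proj1_sig y -> x = y.
Proof. case: x => x Hx; case: y => y Hy /= E; subst y; congr exist; apply: bool_irrelevance. Qed.

Lemma gA : forall x y z : gcarrier G, gmul x (gmul y z) = gmul (gmul x y) z.
Proof. by move=> x y z; apply: gc_eq => /=; rewrite mulgA. Qed.
Lemma g1 : forall x : gcarrier G, gmul (gunit G) x = x.
Proof. by move=> x; apply: gc_eq => /=; rewrite mul1g. Qed.
Lemma gr1 : forall x : gcarrier G, gmul x (gunit G) = x.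
Proof. by move=> x; apply: gc_eq => /=; rewrite mulg1. Qed.

Definition ga : gcarrier G := exist _ a Ha.
Definition gpw i := pw (gunit G) (@gmul gT G) ga i.

Lemma gpw_val i : proj1_sig (gpw i) = (a ^+ i)%g.
Proof. elim: i => [|i IH] //; by rewrite /gpw /pw /= -/(pw _ _ _ _) -/(gpw _) IH expgS. Qed.

Lemma gpw_eq i j : gpw i = gpw j <-> i %% #[a]%g = j %% #[a]%g.
Proof.
split; first by move=> E; apply/eqP; rewrite -eq_expg_mod_order -!gpw_val E.
by move=> E; apply: gc_eq; rewrite !gpw_val -expg_mod_order E expg_mod_order.
Qed.

Lemma gpw_ex (x : gcarrier G) : exists i, x = gpw i.
Proof.
case: x => x Hx; have := Hx; rewrite EG => /cycleP [i Ei].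
by exists i; apply: gc_eq; rewrite gpw_val.
Qed.
End Grp.

Lemma soundness (gT : finGroupType) (G : {group gT}) (a : gT) (Ha : a \in G)
  (EG : forall x, (x \in G) = (x \in <[a]>%g)) p k R :
  prime p -> 0 < k -> #[a]%g = p ^ k -> p ^ k < 2 ^ R ->
  models (gunit G) (@gmul gT G) (phi R (p ^ k) (p ^ k.-1)).
Proof.
move=> pp k0 oa nR v.
set n := p ^ k; set gp := gpw Ha.
have Hpw2 : forall j, gp (2 ^ j.+1) = gmul (gp (2 ^ j)) (gp (2 ^ j)).
  by move=> j; apply: pw_double; [apply: gA | apply: g1].
apply/sat_exr; exists (fun y => if y < R then gp (2 ^ y) else v y); split.
  by move=> y Hy; case: ifP => //; lia.
apply/sat_allr => w2 Hw2.
have [s [sn Hs]] : exists s, s < n /\ w2 R = gp s.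
  have [i Ei] := gpw_ex Ha EG (w2 R).
  exists (i %% n); split; first by rewrite ltn_pmod // expn_gt0 prime_gt0.
  by rewrite Ei; apply/gpw_eq; rewrite oa modn_mod.
apply/sat_exr.
exists (fun y => if (R.+3 <= y) && (y < R.+3 + R) then
          (if odd (s %/ 2 ^ (y - R.+3)) then gp (2 ^ (y - R.+3)) else gunit G) else w2 y).
split; first by move=> y /negbTE ->.
have Hg : forall j, j < R -> (if (R.+3 <= j) && (j < R.+3 + R) then
          (if odd (s %/ 2 ^ (j - R.+3)) then gp (2 ^ (j - R.+3)) else gunit G) else w2 j) = gp (2 ^ j).
  move=> j jR; have -> : (R.+3 <= j) && (j < R.+3 + R) = false by lia.
  by rewrite Hw2 ?jR //; lia.
have HR : (if (R.+3 <= R) && (R < R.+3 + R) then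
          (if odd (s %/ 2 ^ (R - R.+3)) then gp (2 ^ (R - R.+3)) else gunit G) else w2 R) = gp s.
  by have -> : (R.+3 <= R) && (R < R.+3 + R) = false by lia.
apply/sat_body; split.
- move=> j jR; rewrite !Hg ?Hpw2 //; lia.
- exact: gA.
- by split; [apply: g1 | apply: gr1].
- move=> j jR; have -> : (R.+3 <= R.+3 + j) && (R.+3 + j < R.+3 + R) by lia.
  rewrite addKn; case: (odd _); [right; rewrite Hg // | by left].
split.
- rewrite HR (@tprod_eval _ _ _ (@gA gT G) (@g1 gT G) (ga Ha) _ _ 0 s R) ?expn0 ?mul1n //; last by lia.
  move=> i iR; have -> : (R.+3 <= R.+3 + i) && (R.+3 + i < R.+3 + R) by lia.
  by rewrite addKn.
- rewrite (@tnum_eval _ _ _ (@gA gT G) (@g1 gT G) (ga Ha) _ _ 0 R); last 2 first.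
    by move=> i iR; rewrite Hg.
    done.
  rewrite expn0 mul1n; apply: gc_eq; by rewrite gpw_val /= /n -oa expg_order.
- rewrite (@tnum_eval _ _ _ (@gA gT G) (@g1 gT G) (ga Ha) _ _ 0 R); last 2 first.
    by move=> i iR; rewrite Hg.
    by apply: leq_ltn_trans nR; rewrite leq_exp2l ?prime_gt1 //; lia.
  rewrite expn0 mul1n => E.
  have := f_equal (@proj1_sig _ _) E; rewrite gpw_val /= => /eqP.
  rewrite -order_dvdn oa dvdn_Pexp2l ?prime_gt1 //; lia.
Qed.

Lemma completeness (gT : finGroupType) (G : {group gT}) (a : gT) (Ha : a \in G)
  (EG : forall x, (x \in G) = (x \in <[a]>%g)) p k R
  (N : Type) (e' : N) (op' : N -> N -> N) :
  prime p -> 0 < k -> #[a]%g = p ^ k -> p ^ k < 2 ^ R -> 0 < R ->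
  models e' op' (phi R (p ^ k) (p ^ k.-1)) -> isomorphic e' op' (gunit G) (@gmul gT G).
Proof.
move=> pp k0 oa nR R0 Hm.
have := Hm (fun _ => e'); rewrite /phi => /sat_exr [w1 [_ /sat_allr H1]].
have inst : forall x y z, exists w3, (forall j, j < R -> w3 j = w1 j) /\
   w3 R = x /\ w3 R.+1 = y /\ w3 R.+2 = z /\ sat e' op' w3 (body R (p ^ k) (p ^ k.-1)).
  move=> x y z.
  have := H1 (fun i => if i == R then x else if i == R.+1 then y else if i == R.+2 then z else w1 i).
  case/(_ _)/sat_exr.
    move=> i Hi; have -> : (i == R) = false by lia.
    have -> : (i == R.+1) = false by lia.
    by have -> : (i == R.+2) = false by lia.
  move=> w3 [Hw3 Hb]; exists w3; split.
    move=> j jR; rewrite Hw3; last by lia.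
    have -> : (j == R) = false by lia.
    have -> : (j == R.+1) = false by lia.
    by have -> : (j == R.+2) = false by lia.
  rewrite !Hw3; try lia.
  rewrite eqxx; have -> : (R.+1 == R) = false by lia.
  rewrite eqxx; have -> : (R.+2 == R) = false by lia.
  have -> : (R.+2 == R.+1) = false by lia.
  by rewrite eqxx.
have opA : forall x y z, op' x (op' y z) = op' (op' x y) z.
  by move=> x y z; have [w3 [_ [<- [<- [<- /sat_body [_ ? _ _ _]]]]]] := inst x y z.
have op1 : forall x, op' e' x = x.
  by move=> x; have [w3 [_ [<- [_ [_ /sat_body [_ _ [? _] _ _]]]]]] := inst x x x.
have opr1 : forall x, op' x e' = x.
  by move=> x; have [w3 [_ [<- [_ [_ /sat_body [_ _ [_ ?] _ _]]]]]] := inst x x x.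
set g := w1 0.
have [w3 [Hw3 [_ [_ [_ /sat_body [Hch _ _ _ [_ Hn Hm0]]]]]]] := inst e' e' e'.
have Hg : forall j, j < R -> w1 j = pw e' op' g (2 ^ j).
  elim=> [|j IH] jR; first by rewrite /pw /= opr1.
  have jR' : j < R.-1 by lia.
  have E := Hch j jR'; rewrite !Hw3 in E; try lia.
  rewrite E IH; last by lia.
  by rewrite pw_double.
have Hw3g : forall i, i < R -> w3 (0 + i) = pw e' op' g (2 ^ (0 + i)) by move=> i iR; rewrite Hw3 // Hg.
have pn : pw e' op' g (p ^ k) = e'.
  by move: Hn; rewrite (tnum_eval opA op1 Hw3g nR) expn0 mul1n.
have pm0 : pw e' op' g (p ^ k.-1) <> e'.
  move: Hm0; rewrite (tnum_eval opA op1 Hw3g) ?expn0 ?mul1n //.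
  by apply: leq_ltn_trans nR; rewrite leq_exp2l ?prime_gt1 //; lia.
have allpw : forall x, exists s, x = pw e' op' g s.
  move=> x; have [w4 [Hw4 [Ex [_ [_ /sat_body [_ _ _ Hb [Ep _ _]]]]]]] := inst x x x.
  rewrite -Ex Ep; apply: (tprod_exists opA op1) => i iR.
  case: (Hb i iR) => ->; first by exists 0.
  by exists (2 ^ i); rewrite Hw4 // Hg.
have injN := pw_inj_mod opA op1 pp k0 pn pm0.
have modN : forall i j, i %% p ^ k = j %% p ^ k -> pw e' op' g i = pw e' op' g j.
  by move=> i j E; rewrite (pw_mod opA op1 _ pn) E -(pw_mod opA op1 _ pn).
pose s x := proj1_sig (constructive_indefinite_description _ (allpw x)).
have Hs : forall x, x = pw e' op' g (s x) by move=> x; rewrite /s; case: constructive_indefinite_description.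
pose t y := proj1_sig (constructive_indefinite_description _ (gpw_ex Ha EG y)).
have Ht : forall y, y = gpw Ha (t y) by move=> y; rewrite /t; case: constructive_indefinite_description.
exists (fun x => gpw Ha (s x)); split; last split.
- exists (fun y => pw e' op' g (t y)).
    move=> x /=; rewrite {2}(Hs x); apply: modN.
    by rewrite -oa; apply/(gpw_eq Ha); rewrite -Ht.
  move=> y /=; rewrite {2}(Ht y); apply/gpw_eq; rewrite oa; apply: injN.
  by rewrite -Hs.
- have -> : gunit G = gpw Ha 0 by [].
  apply/gpw_eq; rewrite oa; apply: injN; by rewrite -Hs.
- move=> x y /=.
  have -> : gmul (gpw Ha (s x)) (gpw Ha (s y)) = gpw Ha (s x + s y).
    by rewrite /gpw (pwD (@gA gT G) (@g1 gT G)).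
  apply/gpw_eq; rewrite oa; apply: injN.
  by rewrite -Hs pwD // -!Hs.
Qed.

Theorem proposition2p2 :
  exists c : nat,
    forall (p k : nat) (gT : finGroupType) (G : {group gT}),
      prime p -> 0 < k -> cyclic G -> #|G| = p ^ k ->
      exists phi : formula,
        sentence phi /\ Sigma 3 phi /\ describes (gunit G) (@gmul gT G) phi /\
        fsize phi <= c * log2up #|G|.
Proof.
exists 300 => p k gT G pp k0 /cyclicP [a EG] cardG.
have Ha : a \in G by rewrite EG cycle_id.
have EG' : forall x, (x \in G) = (x \in <[a]>%g) by move=> x; rewrite EG.
have oa : #[a]%g = p ^ k by rewrite /order -EG.
have n1 : 1 < p ^ k by rewrite -{1}(expn0 p) ltn_exp2l ?prime_gt1.
set r := log2up #|G|.
have r0 : 0 < r by rewrite /r /log2up up_log_gt0 cardG n1.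
have nR : p ^ k < 2 ^ r.+1.
  apply: leq_ltn_trans (up_logP (p ^ k) (isT : 1 < 2)) _.
  by rewrite /r /log2up cardG ltn_exp2l.
exists (phi r.+1 (p ^ k) (p ^ k.-1)); split; last split; last split.
- exact: phi_sentence.
- exact: phi_Sigma.
- split; first exact: (soundness Ha EG').
  move=> M e' op' HM; exact: (completeness Ha EG' pp k0 oa nR).
- apply: leq_trans (phi_size _ _ _) _ => //; lia.
Qed.
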